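(* Let $G$ be a finite directed tree rooted at the source $S$ (all edges directed away from $S$), of depth $D(G)\ge1$, in which every edge has rate $c\ge1$, and run the dissemination protocol below with waiting times as defined below. Let $t$ be an integer with $2D(G)-1<t<\lfloor n/c\rfloor$. Then with probability at least $1-C/q$, where $C$ depends only on $G,n,c,t$, the following holds: for every node $u\neq S$ and every node $w\neq u$, one has $\Pi_u(t)\subseteq\Pi_w(t)$ if and only if $w$ is an ancestor of $u$ (a node on the path from $S$ to $u$, $S$ included); moreover the parent of $u$ is the unique node $w\ne u$ that minimizes $\dim\Pi_w(t)$ among all nodes $w\neq u$ with $\Pi_u(t)\subseteq\Pi_w(t)$. In particular the tree is uniquely determined by the collection $\{\Pi_w(t)\}_{w\in V}$.
   Context: Dissemination protocol: $q$ is a prime power, the source holds the space $\Pi_S=\mathbb{F}_q^n$ and we set $\Pi_S(s)=\mathbb{F}_q^n$ for all $s$. Time is slotted, $s=1,2,\dots$; every vector sent in slot $s$ is received before the end of slot $s$. In each slot $s\le\lfloor n/c\rfloor$ the source sends on each outgoing edge $c$ vectors drawn uniformly at random from $\mathbb{F}_q^n$. Every non-source node $v$ has a waiting time $\tau_v$; in every slot $s\ge\tau_v+1$ it sends on each outgoing edge $c$ vectors, each drawn uniformly at random from $\Pi_v(s-1)$. All random draws are mutually independent (given the past). $\Pi_v(s)$ denotes the span of all vectors received by $v$ in slots $1,\dots,s$, with $\Pi_v(0)=\{0\}$. Waiting time (in this tree setting): $\tau_v$ is the first slot $s$ during which the parent of $v$ transmits to $v$ and $\dim\Pi_v(s)\ge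 c+1$. The depth $D(G)$ is the length of the longest path from $S$ to a node. *)

(* Defs.v *)
From HB Require Import structures.
From mathcomp Require Import all_boot all_order all_algebra.
Set Implicit Arguments. Unset Strict Implicit. Unset Printing Implicit Defensive.
Import Order.TTheory GRing.Theory Num.Theory.
Local Open Scope ring_scope.

(* A finite directed tree rooted at S, given by its parent map:
   the edges are (par v -> v) for v != S, directed away from S. *)
Definition is_rooted_tree (V : finType) (S : V) (par : V -> V) : Prop :=
  par S = S /\ forall v : V, fconnect par v S.

(* depth of v = length of the path S -> v; D(G) = max depth. *)
Definition depth (V : finType) (S : V) (par : V -> V) : nat :=
  \max_(v : V) findex par v S.

(* w is an ancestor of u (node on the path from S to u, u itself included). *)
Definition ancestor (V : finType) (par : V -> V) (w u : V) : bool :=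
  fconnect par u w.

(* State at the end of a slot: Pi_v (as a square matrix whose row space is
   the subspace) and the flag "tau_v <= current slot". *)
Definition state (F : finFieldType) (V : finType) (n : nat) : Type :=
  ({ffun V -> 'M[F]_n} * {ffun V -> bool})%type.

Definition init_state (F : finFieldType) (V : finType) (S : V) (n : nat)
  : state F V n :=
  ([ffun v => if v == S then 1%:M else 0], [ffun _ => false]).

(* Does node w transmit (on all its outgoing edges) in slot s, given the state
   st at the end of slot s-1? *)
Definition sends (F : finFieldType) (V : finType) (S : V) (n c : nat)
  (s : nat) (st : state F V n) (w : V) : bool :=
  if w == S then (s <= n %/ c)%N else st.2 w.

(* Set from which each of the c vectors on the edge (par v -> v) is drawn
   uniformly in slot s ([set 0] encodes "nothing is sent"). *)
Definition allowed (F : finFieldType) (V : finType) (S : V) (par : V -> V)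
  (n c : nat) (s : nat) (st : state F V n) (v : V) : {set 'rV[F]_n} :=
  if (v != S) && sends S c s st (par v) then
    (if par v == S then setT else [set x : 'rV[F]_n | (x <= st.1 (par v))%MS])
  else [set 0].

(* All draws of slot s: the joint uniform distribution of independent uniform
   draws is the uniform distribution on this product set. *)
Definition draws (F : finFieldType) (V : finType) (S : V) (par : V -> V)
  (n c : nat) (s : nat) (st : state F V n)
  : {set {ffun (V * 'I_c) -> 'rV[F]_n}} :=
  [set f : {ffun (V * 'I_c) -> 'rV[F]_n} |
     [forall p : V * 'I_c, f p \in allowed S par c s st p.1]].

Definition step (F : finFieldType) (V : finType) (S : V) (par : V -> V)
  (n c : nat) (s : nat) (st : state F V n) (f : {ffun (V * 'I_c) -> 'rV[F]_n})
  : state F V n :=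
  let Pi' := [ffun v => if v == S then st.1 v
                        else (st.1 v + \sum_(i < c) <<f (v, i)>>)%MS] in
  (Pi', [ffun v => st.2 v ||
           [&& v != S, sends S c s st (par v) & (c.+1 <= \rank (Pi' v))%N]]).

(* prob k s st E = probability that E holds after running slots s+1..s+k
   starting from state st (end of slot s). *)
Fixpoint prob (F : finFieldType) (V : finType) (S : V) (par : V -> V)
  (n c : nat) (k s : nat) (st : state F V n) (E : state F V n -> bool) : rat :=
  match k with
  | 0 => if E st then 1 else 0
  | k'.+1 =>
      (\sum_(f in draws S par c s.+1 st)
          prob S par c k' s.+1 (step S par s.+1 st f) E)
      / (#|draws S par c s.+1 st|)%:R
  end.

Definition good_event (F : finFieldType) (V : finType) (S : V) (par : V -> V)
  (n : nat) (st : state F V n) : bool :=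
  let Pi := st.1 in
  [forall u : V, (u != S) ==>
     [forall w : V, (w != u) ==> ((Pi u <= Pi w)%MS == ancestor par w u)]]
  &&
  [forall u : V, (u != S) ==>
     ((Pi u <= Pi (par u))%MS &&
      [forall w : V, [&& w != u, w != par u & (Pi u <= Pi w)%MS] ==>
                     (\rank (Pi (par u)) < \rank (Pi w))%N])].

(* Main.v *)
Require Import Defs.
From HB Require Import structures.
From mathcomp Require Import all_boot all_order all_algebra.
From mathcomp Require Import zify ring lra.
Import Order.TTheory GRing.Theory Num.Theory.
Set Implicit Arguments. Unset Strict Implicit. Unset Printing Implicit Defensive.

Lemma card_bigcup_le (I T : finType) (P : {pred I}) (S : I -> {set T}) :
  (#|\bigcup_(i in P) S i| <= \sum_(i in P) #|S i|)%N.
Proof.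
elim/big_rec2: _ => [|i x y _ IH]; first by rewrite cards0.
rewrite cardsU; apply: leq_trans (leq_subr _ _) _; by rewrite leq_add2l.
Qed.

Section Prod.
Variables (T R : finType) (A : T -> {set R}).
Definition Dset := [set f : {ffun T -> R} | [forall p, f p \in A p]].
Definition upd (f : {ffun T -> R}) p0 a := [ffun p => if p == p0 then a else f p].

Lemma upd_in f p0 a : f \in Dset -> a \in A p0 -> upd f p0 a \in Dset.
Proof.
rewrite !inE => /forallP H Ha; apply/forallP => p; rewrite ffunE.
by case: eqP => [->|]; [|rewrite H].
Qed.

Lemma count_coord p0 r0 (Hr0 : r0 \in A p0) (B : pred {ffun T -> R}) m :
  (forall g, g \in Dset -> #|[set a in A p0 | B (upd g p0 a)]| * m <= #|A p0|)%N ->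
  (#|[set f in Dset | B f]| * m <= #|Dset|)%N.
Proof.
move=> H.
set D0 := [set g in Dset | g p0 == r0].
have sub : [set f in Dset | B f] \subset
   \bigcup_(g in D0) [set upd g p0 a | a in [set a in A p0 | B (upd g p0 a)]].
  apply/subsetP => f; rewrite inE => /andP [fD Bf].
  have fp0 : f p0 \in A p0 by move: fD; rewrite inE => /forallP.
  have eqf : upd (upd f p0 r0) p0 (f p0) = f.
    by apply/ffunP => p; rewrite !ffunE; case: eqP => // ->.
  apply/bigcupP; exists (upd f p0 r0).
    by rewrite inE upd_in //= ffunE eqxx.
  apply/imsetP; exists (f p0) => //; by rewrite inE fp0 eqf.
apply: leq_trans (leq_mul (subset_leq_card sub) (leqnn m)) _.
apply: leq_trans (leq_mul (card_bigcup_le _ _) (leqnn m)) _.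
rewrite big_distrl /=.
apply: leq_trans (_ : \sum_(g in D0) #|A p0| <= _)%N.
  apply: leq_sum => g; rewrite inE => /andP [gD _].
  apply: leq_trans (H g gD); rewrite leq_mul2r leq_imset_card orbT //.
rewrite sum_nat_const -cardsX.
rewrite -(card_in_imset (f := fun u : {ffun T -> R} * R => upd u.1 p0 u.2)).
  apply: subset_leq_card; apply/subsetP => f /imsetP [[g a]].
  rewrite inE /= => /andP [gD0 aA] ->; rewrite inE in gD0.
  by case/andP: gD0 => gD _; apply: upd_in.
move=> [g1 a1] [g2 a2]; rewrite !inE /= => /andP [g1D a1A] /andP [g2D a2A] E.
have ea : a1 = a2 by move/ffunP: E => /(_ p0); rewrite !ffunE eqxx.
congr (_, _) => //; apply/ffunP => p.
move/ffunP: E => /(_ p); rewrite !ffunE.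
case: eqP => [-> _|//].
by case/andP: g1D => _ /eqP ->; case/andP: g2D => _ /eqP ->.
Qed.

End Prod.
Section Card.
Variable F : finFieldType.

Lemma card_rowspace n m (M : 'M[F]_(m, n)) :
  #|[set a : 'rV[F]_n | (a <= M)%MS]| = (#|F| ^ \rank M)%N.
Proof.
set B := row_base M.
have -> : [set a : 'rV[F]_n | (a <= M)%MS] = [set (u *m B)%R | u in [set: 'rV[F]_(\rank M)]].
  apply/setP => a; rewrite inE; apply/idP/imsetP.
    rewrite -(eq_row_base M) => /submxP [D ->]; by exists D.
  by move=> [u _ ->]; rewrite -(eq_row_base M) submxMl.
rewrite card_in_imset ?cardsT ?card_mx ?mul1n //.
move=> u v _ _ /eqP; rewrite -subr_eq0 -mulmxBl mulmx_free_eq0 ?row_base_free //.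
by rewrite subr_eq0 => /eqP.
Qed.

Lemma card_sub_lt n m1 m2 (P : 'M[F]_(m1, n)) (W : 'M[F]_(m2, n)) :
  ~~ (P <= W)%MS ->
  (#|[set a : 'rV[F]_n | (a <= P)%MS && (a <= W)%MS]| * #|F| <=
   #|[set a : 'rV[F]_n | (a <= P)%MS]|)%N.
Proof.
move=> nPW.
have -> : [set a : 'rV[F]_n | (a <= P)%MS && (a <= W)%MS] =
          [set a : 'rV[F]_n | (a <= P :&: W)%MS].
  by apply/setP => a; rewrite !inE sub_capmx.
rewrite !card_rowspace -expnSr leq_exp2l ?card_finNzRing_gt1 //.
have := mxrank_leqif_sup (capmxSl P W).
move=> [] le; rewrite ltn_neqAle le andbT => ->.
  apply: contra nPW; by rewrite sub_capmx submx_refl.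
Qed.

End Card.

Lemma event_bound (F : finFieldType) (T : finType) n m (A : T -> {set 'rV[F]_n})
  p0 (Pm : 'M[F]_(m, n)) (W : {ffun T -> 'rV[F]_n} -> 'M[F]_n)
  (C : pred {ffun T -> 'rV[F]_n}) :
  A p0 = [set a | (a <= Pm)%MS] ->
  (forall f a, W (upd f p0 a) = W f) -> (forall f a, C (upd f p0 a) = C f) ->
  (forall f, C f -> ~~ (Pm <= W f)%MS) ->
  (#|[set f in Dset A | (f p0 <= W f)%MS && C f]| * #|F| <= #|Dset A|)%N.
Proof.
move=> eA eW eC nPW.
have := (@count_coord _ _ A p0 (0 : 'rV[F]_n)%R _ (fun f => (f p0 <= W f)%MS && C f) #|F|). apply; first by rewrite eA inE sub0mx.
move=> g _; case Cg : (C g).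
  rewrite eA; apply: leq_trans (card_sub_lt (nPW _ Cg)).
  rewrite leq_mul2r; apply/orP; right; apply: subset_leq_card.
  apply/subsetP => a; rewrite !inE eW eC Cg ffunE eqxx andbT => /andP [-> ->] //.
have -> : [set a in A p0 | (upd g p0 a p0 <= W (upd g p0 a))%MS && C (upd g p0 a)] = set0.
  by apply/setP => a; rewrite !inE eC Cg !andbF.
by rewrite cards0.
Qed.
Section Mx.
Variable F : fieldType.
Variable n : nat.
Implicit Types (A : 'M[F]_n) (g z : 'rV[F]_n).

Lemma rank_add_row A g : ~~ (g <= A)%MS -> \rank (A + <<g>>)%MS = (\rank A).+1.
Proof.
move=> ngA; apply/eqP; rewrite eqn_leq; apply/andP; split.
  apply: leq_trans (mxrank_adds_leqif _ _).1 _.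
  by rewrite genmxE -[(\rank A).+1]addn1 leq_add2l rank_leq_row.
have [le _] := mxrank_leqif_sup (addsmxSl A <<g>>%MS).
rewrite ltn_neqAle le andbT.
have := mxrank_leqif_sup (addsmxSl A <<g>>%MS).
move=> [_ ->]; apply: contra ngA => H.
apply: submx_trans H; apply: submx_trans (addsmxSr A _); by rewrite genmxE.
Qed.

Lemma rank_add_row_le A g : (\rank (A + <<g>>)%MS <= (\rank A).+1)%N.
Proof.
apply: leq_trans (mxrank_adds_leqif _ _).1 _.
by rewrite genmxE -[(\rank A).+1]addn1 leq_add2l rank_leq_row.
Qed.

Lemma exchange A g z :
  (z <= A + <<g>>)%MS -> ~~ (z <= A)%MS -> (g <= A + <<z>>)%MS.
Proof.
move=> zAg nzA.
have sub : (A + <<z>> <= A + <<g>>)%MS by rewrite addsmx_sub addsmxSl genmxE.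
have := mxrank_leqif_eq sub; move=> [_ Heq].
have : (A + <<z>> == A + <<g>>)%MS.
  rewrite -Heq rank_add_row //; apply/eqP/esym/eqP.
  rewrite eqn_leq rank_add_row_le /=.
  by have [le _] := mxrank_leqif_sup sub; rewrite -(rank_add_row nzA).
case/andP => _ H; apply: submx_trans H; apply: submx_trans (addsmxSr A _); by rewrite genmxE.
Qed.

End Mx.
Section Tree.
Variables (V : finType) (S : V) (par : V -> V).
Hypothesis Htree : is_rooted_tree S par.
Definition dep v := findex par v S.

Lemma parS : par S = S. Proof. by case: Htree. Qed.
Lemma toS v : fconnect par v S. Proof. by case: Htree. Qed.
Lemma dep_S : dep S = 0. Proof. exact: findex0. Qed.
Lemma dep_par v : v != S -> dep v = (dep (par v)).+1.
Proof. move=> vS; apply: fconnect_findex; [exact: toS | by rewrite eq_sym]. Qed.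
Lemma dep_pos v : v != S -> 0 < dep v.
Proof. by move/dep_par ->. Qed.
Lemma dep_par' v : dep (par v) = (dep v).-1.
Proof. by case: (eqVneq v S) => [->|/dep_par ->]; rewrite ?parS ?dep_S. Qed.
Lemma dep_le v : dep v <= depth S par.
Proof. exact: (leq_bigmax v). Qed.

Lemma iterS_fix k : iter k par S = S.
Proof. by elim: k => //= k ->; rewrite parS. Qed.
Lemma ancS y : fconnect par S y -> y = S.
Proof. by move/iter_findex <-; rewrite iterS_fix. Qed.

Lemma dep_iter k v : dep (iter k par v) = dep v - k.
Proof. by elim: k => [|k IH]; rewrite ?subn0 //= dep_par' IH subnS. Qed.

Lemma anc_step u w : fconnect par u w -> w != u -> fconnect par (par u) w.
Proof.
move=> uw wu; move: (iter_findex uw) => E.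
have : findex par u w != 0 by rewrite findex_eq0 eq_sym.
case: (findex par u w) E => // k E _; rewrite -E iterSr; exact: fconnect_iter.
Qed.

Lemma anc_dep x w : fconnect par x w -> w != x -> dep w < dep x.
Proof.
move=> xw wx.
have xS : x != S.
  apply/negP => /eqP xS; move: xw; rewrite xS => /ancS wS.
  by move: wx; rewrite wS xS eqxx.
have k0 : findex par x w != 0 by rewrite findex_eq0 eq_sym.
rewrite -{1}(iter_findex xw) dep_iter.
move: k0 (dep_pos xS); case: (findex par x w) => [|k] //= _ p.
by rewrite ltn_subrL p.
Qed.

Lemma anc_par x : fconnect par x (par x). Proof. exact: fconnect1. Qed.
Lemma anc_trans x y z : fconnect par x y -> fconnect par y z -> fconnect par x z.
Proof. exact: connect_trans. Qed.
End Tree.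

Section Main.
Variables (F : finFieldType) (V : finType) (S : V) (par : V -> V) (n c' t : nat).
Hypothesis Htree : is_rooted_tree S par.
Hypothesis Htn : t < n %/ c'.+1.
Local Notation c := c'.+1.
Local Notation dep := (dep S par).
Local Notation st_t := (state F V n).

Lemma tcn : t * c < n.
Proof. by move: Htn; rewrite leq_divRL //; lia. Qed.

Definition Inv (s : nat) (st : st_t) : Prop :=
 [/\ st.1 S = 1%:M%R,
     forall v, v != S -> (st.1 v <= st.1 (par v))%MS,
     forall v, v != S -> \rank (st.1 v) = c * (s + 2 - 2 * dep v),
     forall v, v != S -> st.2 v = (2 * dep v <= s) &
     forall x y, x != S -> ~~ fconnect par x y -> 0 < \rank (st.1 x) ->
        ~~ (st.1 x <= st.1 y)%MS].

Definition rec s (st : st_t) v := (v != S) && sends S c s.+1 st (par v).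

Lemma rec_iff s st v : Inv s st -> s < t -> v != S -> rec s st v = (2 * dep v <= s + 2).
Proof.
case=> _ _ _ Hf _ Hst vS; rewrite /rec vS /sends /=.
case: eqP => [pS|/eqP pS].
  have := dep_par Htree vS; rewrite pS dep_S => ->.
  have -> : s.+1 <= n %/ c by exact: leq_trans Hst (ltnW Htn).
  lia.
rewrite Hf // (dep_par Htree vS); lia.
Qed.

Lemma allowed_rec s st v : Inv s st -> rec s st v ->
  allowed S par c s.+1 st v = [set a | (a <= st.1 (par v))%MS].
Proof.
case=> HS _ _ _ _ r; rewrite /allowed; move: r; rewrite /rec => ->.
case: eqP => [->|//]; rewrite HS; apply/setP => a; by rewrite !inE submx1.
Qed.

Lemma allowed_norec s st v : ~~ rec s st v -> allowed S par c s.+1 st v = [set 0%R].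
Proof. by rewrite /allowed /rec => /negbTE ->. Qed.

Lemma rank_small s st v : Inv s st -> s < t -> v != S -> \rank (st.1 v) <= c * s.
Proof.
case=> _ _ Hr _ _ Hst vS; rewrite Hr //; have := dep_pos Htree vS; nia.
Qed.

Lemma gap s st v : Inv s st -> s < t -> rec s st v ->
  \rank (st.1 v) + c < \rank (st.1 (par v)).
Proof.
move=> I Hst r; have vS : v != S by case/andP: r.
have rs := rank_small I Hst vS.
have := rec_iff I Hst vS; rewrite r => /esym H.
case: I => HS _ Hr _ _.
case: (eqVneq (par v) S) => [pS|pS].
  rewrite pS HS mxrank1; have := tcn.
  have : c * s.+1 <= c * t by rewrite leq_mul2l Hst orbT.
  lia.
rewrite !Hr // (dep_par Htree vS).
have -> : s + 2 - 2 * dep (par v) = (s + 2 - 2 * (dep (par v)).+1) + 2.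
  by move: H; rewrite (dep_par Htree vS); lia.
rewrite mulnDr; lia.
Qed.

Definition zw (A B : 'M[F]_n) : 'rV[F]_n :=
  if [pick i | ~~ (row i A <= B)%MS] is Some i then row i A else 0%R.

Lemma zw_sub A B : (zw A B <= A)%MS.
Proof. rewrite /zw; case: pickP => [i _|_]; by rewrite ?row_sub ?sub0mx. Qed.

Lemma zw_not A B : ~~ (A <= B)%MS -> ~~ (zw A B <= B)%MS.
Proof.
move=> nAB; rewrite /zw; case: pickP => [i //|H].
by move: nAB => /row_subPn [i]; rewrite -/(is_true _) (negbTE (negbT (H i))).
Qed.

Definition pre (f : {ffun V * 'I_c -> 'rV[F]_n}) v (i : nat) : 'M[F]_n :=
  (\sum_(j < i) <<f (v, inord j)>>)%MS.

Lemma pre_full (f : {ffun V * 'I_c -> 'rV[F]_n}) v : (\sum_(j < c) <<f (v, j)>>)%MS = pre f v c.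
Proof. by apply: eq_bigr => j _; rewrite inord_val. Qed.

Lemma pre_S (f : {ffun V * 'I_c -> 'rV[F]_n}) v k : pre f v k.+1 = (pre f v k + <<f (v, inord k)>>)%MS.
Proof. by rewrite /pre big_ord_recr. Qed.

Lemma pre_rank (A : 'M[F]_n) (f : {ffun V * 'I_c -> 'rV[F]_n}) v k : \rank (A + pre f v k)%MS <= \rank A + k.
Proof.
elim: k => [|k IH]; first by rewrite /pre big_ord0 addsmx0 addn0.
rewrite pre_S addsmxA; apply: leq_trans (rank_add_row_le _ _) _; by rewrite addnS ltnS.
Qed.

Definition zsel (st : st_t) x y :=
  if \rank (st.1 x) == 0 then zw (st.1 (par x)) (st.1 y) else zw (st.1 x) (st.1 y).

Definition Yv (st : st_t) f y := (st.1 y + pre f y c)%MS.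

Definition Eidx := (V * V * 'I_c * 'I_3)%type.

Definition ev_g s st (e : Eidx) : bool :=
  let: (x, y, i, k) := e in
  match val k with
  | 0 => rec s st x
  | 1 => [&& x != S, ~~ fconnect par x y & rec s st y]
  | _ => [&& x != S, \rank (st.1 x) == 0, rec s st x & ~~ fconnect par x y]
  end.

Definition ev_p (e : Eidx) : V * 'I_c :=
  let: (x, y, i, k) := e in if val k == 1 then (y, i) else (x, i).

Definition ev_W (st : st_t) (e : Eidx) (f : {ffun V * 'I_c -> 'rV[F]_n}) : 'M[F]_n :=
  let: (x, y, i, k) := e in
  match val k with
  | 0 => (st.1 x + pre f x i)%MS
  | 1 => (st.1 y + pre f y i + <<zsel st x y>>)%MS
  | _ => Yv st f y
  end.

Definition ev_C (st : st_t) (e : Eidx) (f : {ffun V * 'I_c -> 'rV[F]_n}) : bool :=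
  let: (x, y, i, k) := e in
  match val k with
  | 0 | 1 => true
  | _ => ~~ (zsel st x y <= Yv st f y)%MS
  end.

Definition Ev s st e (f : {ffun V * 'I_c -> 'rV[F]_n}) := ev_g s st e && ((f (ev_p e) <= ev_W st e f)%MS && ev_C st e f).

Lemma pre_upd (f : {ffun V * 'I_c -> 'rV[F]_n}) v j p a :
  (forall j', j' < j -> (v, inord j') != p) -> pre (upd f p a) v j = pre f v j.
Proof.
move=> H; apply: eq_bigr => j' _; rewrite ffunE.
by have := H j' (ltn_ord j'); case: eqP.
Qed.

Lemma draws_D s (st : st_t) :
  draws S par c s st = Dset (fun p : V * 'I_c => allowed S par c s st p.1).
Proof. by []. Qed.

Lemma not_sub_rank m1 m2 (A : 'M[F]_(m1, n)) (B : 'M[F]_(m2, n)) :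
  \rank B < \rank A -> ~~ (A <= B)%MS.
Proof. move=> lt; apply/negP => /mxrankS; by rewrite leqNgt lt. Qed.

Lemma ev_bound s st e : Inv s st -> s < t ->
  #|[set f in draws S par c s.+1 st | Ev s st e f]| * #|F| <=
  #|draws S par c s.+1 st|.
Proof.
move=> I Hst.
case g : (ev_g s st e); last first.
  have -> : [set f in draws S par c s.+1 st | Ev s st e f] = set0.
    by apply/setP => f; rewrite !inE /Ev g andbF.
  by rewrite cards0.
have -> : [set f in draws S par c s.+1 st | Ev s st e f] =
   [set f in draws S par c s.+1 st | (f (ev_p e) <= ev_W st e f)%MS && ev_C st e f].
  by apply/setP => f; rewrite !inE /Ev g.
rewrite draws_D.
apply: (event_bound (Pm := st.1 (par (ev_p e).1))).
- move: g; case: e => [[[x y] i] [[|[|[|k]]] hk]] //= g; apply: allowed_rec => //.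
  + by case/and3P: g.
  + by case/and4P: g.
- move=> f a; case: e g => [[[x y] i] [[|[|[|k]]] hk]] //= g.
  + apply: congr1; apply: pre_upd => j' lj; apply/negP => /eqP; case => ej.
    have jc : j' < c := ltn_trans lj (ltn_ord i).
    by move/(congr1 val): ej; rewrite /= inordK // => ej; rewrite ej ltnn in lj.
  + congr (_ + _)%MS; congr (_ + _)%MS; apply: pre_upd => j' lj; apply/negP => /eqP; case => ej.
    have jc : j' < c := ltn_trans lj (ltn_ord i).
    by move/(congr1 val): ej; rewrite /= inordK // => ej; rewrite ej ltnn in lj.
  + rewrite /Yv; congr (_ + _)%MS; apply: pre_upd => j' _; apply/negP => /eqP [eyx _].
    by case/and4P: g => _ _ _; rewrite -eyx connect0.
- move=> f a; case: e g => [[[x y] i] [[|[|[|k]]] hk]] //= g.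
  rewrite /Yv pre_upd //; move=> j' _; apply/negP => /eqP [eyx _].
  by case/and4P: g => _ _ _; rewrite -eyx connect0.
- move=> f; case: e g => [[[x y] i] [[|[|[|k]]] hk]] //= g.
  + move=> _; apply: not_sub_rank; apply: leq_ltn_trans (pre_rank _ _ _ _) _.
    apply: leq_trans (gap I Hst g); have := ltn_ord i; lia.
  + move=> _; case/and3P: g => _ _ ry; apply: not_sub_rank.
    apply: leq_ltn_trans (rank_add_row_le _ _) _.
    apply: leq_ltn_trans (_ : (\rank (st.1 y) + i).+1 < _).
      by rewrite ltnS pre_rank.
    apply: leq_trans (gap I Hst ry); have := ltn_ord i; lia.
  + move=> nz; apply: contra nz => H; apply: submx_trans H.
    case/and4P: g => _ r0 _ _; by rewrite /zsel r0 zw_sub.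
Qed.

Definition kk0 : 'I_3 := @Ordinal 3 0 isT.
Definition kk1 : 'I_3 := @Ordinal 3 1 isT.
Definition kk2 : 'I_3 := @Ordinal 3 2 isT.

Section Step.
Variables (s : nat) (st : st_t) (f : {ffun V * 'I_c -> 'rV[F]_n}).
Hypothesis I : Inv s st.
Hypothesis Hst : s < t.
Hypothesis fD : f \in draws S par c s.+1 st.
Hypothesis noE : forall e, ~~ Ev s st e f.

Lemma f_allowed v i : f (v, i) \in allowed S par c s.+1 st v.
Proof. by move: fD; rewrite inE => /forallP /(_ (v, i)). Qed.

Lemma f_rec v i : rec s st v -> (f (v, i) <= st.1 (par v))%MS.
Proof. by move=> r; have := f_allowed v i; rewrite (allowed_rec I r) inE. Qed.

Lemma f_norec v i : ~~ rec s st v -> f (v, i) = 0%R.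
Proof. by move=> r; have := f_allowed v i; rewrite (allowed_norec r) inE => /eqP. Qed.

Lemma sum_norec v (A : 'M[F]_n) : ~~ rec s st v -> (\sum_(i < c) <<f (v, i)>> <= A)%MS.
Proof. move=> r; apply/sumsmx_subP => i _; by rewrite f_norec // genmx0 sub0mx. Qed.

Lemma pre_norec v k (A : 'M[F]_n) : ~~ rec s st v -> (pre f v k <= A)%MS.
Proof. move=> r; apply/sumsmx_subP => i _; by rewrite f_norec // genmx0 sub0mx. Qed.

Let st' := step S par s.+1 st f.

Lemma st'1 v : st'.1 v = if v == S then st.1 v else (st.1 v + \sum_(i < c) <<f (v, i)>>)%MS.
Proof. by rewrite /st' /step /= ffunE. Qed.

Lemma st'_sup v : (st.1 v <= st'.1 v)%MS.
Proof. by rewrite st'1; case: eqP => _; rewrite ?submx_refl ?addsmxSl. Qed.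

Lemma rank_norec v : v != S -> ~~ rec s st v -> \rank (st'.1 v) = \rank (st.1 v).
Proof.
move=> vS r; rewrite st'1 (negbTE vS).
by have /addsmx_idPl -> := sum_norec (st.1 v) r.
Qed.

Lemma rank_rec v : rec s st v -> \rank (st'.1 v) = \rank (st.1 v) + c.
Proof.
move=> r; have vS : v != S by case/andP: r.
rewrite st'1 (negbTE vS) pre_full.
suff H : forall k, k <= c -> \rank (st.1 v + pre f v k)%MS = \rank (st.1 v) + k by apply: H.
elim=> [|k IH] kc; first by rewrite /pre big_ord0 addsmx0 addn0.
rewrite pre_S addsmxA rank_add_row; first by rewrite (IH (ltnW kc)) addnS.
have := noE (v, v, inord k, kk0); rewrite /Ev /= r /= andbT.
by rewrite inordK.
Qed.

Lemma zavoid y (z : 'rV[F]_n) : ~~ (z <= st.1 y)%MS ->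
  (rec s st y -> forall i : 'I_c, ~~ (f (y, i) <= st.1 y + pre f y i + <<z>>)%MS) ->
  ~~ (z <= Yv st f y)%MS.
Proof.
move=> nz H; rewrite /Yv.
case r : (rec s st y); last first.
  by have /addsmx_idPl -> := pre_norec c (st.1 y) (negbT r).
suff K : forall k, k <= c -> ~~ (z <= st.1 y + pre f y k)%MS by apply: K.
elim=> [|k IH] kc; first by rewrite /pre big_ord0 addsmx0.
rewrite pre_S addsmxA; apply/negP => zk.
have := H r (inord k); rewrite inordK //; apply/negP/negPn.
apply: exchange zk _; apply: IH; exact: ltnW.
Qed.

Lemma st'2 v : st'.2 v = st.2 v || [&& v != S, sends S c s.+1 st (par v) & c.+1 <= \rank (st'.1 v)].
Proof. by rewrite /st' /step /= !ffunE. Qed.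

Lemma rank' v : v != S -> \rank (st'.1 v) = c * (s.+1 + 2 - 2 * dep v).
Proof.
have I' := I; case: I' => HS Hsub Hr Hf Hg.
move=> vS; have := rec_iff I Hst vS.
case r : (rec s st v) => /esym E.
  rewrite rank_rec // Hr //.
  have -> : s.+1 + 2 - 2 * dep v = (s + 2 - 2 * dep v) + 1 by lia.
  by rewrite mulnDr muln1.
rewrite rank_norec ?r // Hr //.
have -> : s.+1 + 2 - 2 * dep v = 0 by lia.
have -> : s + 2 - 2 * dep v = 0 by lia.
done.
Qed.

Lemma Inv_step : Inv s.+1 st'.
Proof.
have I' := I; case: I' => HS Hsub Hr Hf Hg.
have S'S : st'.1 S = 1%:M%R by rewrite st'1 eqxx.
split => //.
-
  move=> v vS; rewrite st'1 (negbTE vS); rewrite addsmx_sub.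
  apply/andP; split; first exact: submx_trans (Hsub v vS) (st'_sup _).
  apply: submx_trans (st'_sup (par v)).
  apply/sumsmx_subP => i _; rewrite genmxE.
  case r : (rec s st v); first exact: f_rec.
  by rewrite f_norec ?r // sub0mx.
- exact: rank'.
-
  move=> v vS; rewrite st'2 Hf // andbA -/(rec s st v) (rec_iff I Hst vS) rank' //.
  case: (leqP (2 * dep v) s) => h /=; first by apply/esym; apply: leq_trans h _.
  have -> : (2 * dep v <= s.+1) = (2 * dep v == s.+1) by lia.
  case: (ltngtP (2 * dep v) s.+1) => h2.
  + lia.
  + have hl : c * (s.+1 + 2 - 2 * dep v) <= c * 1.
      by rewrite leq_mul2l; apply/orP; right; lia.
    rewrite muln1 in hl.
    have -> : (c.+1 <= c * (s.+1 + 2 - 2 * dep v)) = false by lia.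
    rewrite andbF; apply/esym/eqP; lia.
  + have -> : s.+1 + 2 - 2 * dep v = 2 by lia.
    apply/andP; split; lia.
-
  move=> x y xS nxy.
  have yS : y != S by apply: contra nxy => /eqP ->; exact: toS.
  have Hz : rec s st y -> forall i : 'I_c,
      ~~ (f (y, i) <= st.1 y + pre f y i + <<zsel st x y>>)%MS.
    move=> ry i; have := noE (x, y, i, kk1); by rewrite /Ev /= xS nxy ry /= andbT.
  have eY : st'.1 y = Yv st f y by rewrite st'1 (negbTE yS) pre_full.
  rewrite eY.
  case rx0 : (\rank (st.1 x) == 0).
  + move=> pos.
    have rx : rec s st x.
      apply/negPn/negP => nr; move: pos; by rewrite rank_norec // (eqP rx0).
    have nPy : ~~ (st.1 (par x) <= st.1 y)%MS.
      case: (eqVneq (par x) S) => [pS|pS].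
        rewrite pS HS; apply/negP => /mxrankS; rewrite mxrank1.
        have := rank_small I Hst yS; have := tcn.
        have : c * s.+1 <= c * t by rewrite leq_mul2l Hst orbT.
        lia.
      apply: Hg => //.
        by apply: contra nxy; apply: anc_trans; exact: anc_par.
      move: rx; rewrite /rec /sends xS (negbTE pS) /= Hf // Hr // => h.
      by rewrite muln_gt0; apply/andP; split => //; lia.
    have nz : ~~ (zsel st x y <= Yv st f y)%MS.
      apply: zavoid => //; rewrite /zsel rx0; exact: zw_not.
    have := noE (x, y, ord0, kk2); rewrite /Ev /= xS rx0 rx nxy /= nz andbT => nf.
    apply: contra nf; apply: submx_trans.
    rewrite st'1 (negbTE xS); apply: submx_trans (addsmxSr _ _).
    by apply: (sumsmx_sup ord0) => //; rewrite genmxE.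
  + move=> _; have pos : 0 < \rank (st.1 x) by rewrite lt0n rx0.
    have nxy' := Hg x y xS nxy pos.
    have nz : ~~ (zsel st x y <= Yv st f y)%MS.
      apply: zavoid => //; rewrite /zsel rx0; exact: zw_not.
    apply: contra nz => H; apply: submx_trans H.
    rewrite /zsel rx0; exact: submx_trans (zw_sub _ _) (st'_sup x).
Qed.

End Step.

Lemma Inv_init : Inv 0 (init_state F S n).
Proof.
split => /=.
- by rewrite ffunE eqxx.
- by move=> v vS; rewrite ffunE (negbTE vS) sub0mx.
- move=> v vS; rewrite ffunE (negbTE vS) mxrank0; have := dep_pos Htree vS.
  move=> h; have -> : 0 + 2 - 2 * dep v = 0 by lia.
  by rewrite muln0.
- move=> v vS; rewrite ffunE; have := dep_pos Htree vS; lia.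
- by move=> x y xS _; rewrite ffunE (negbTE xS) mxrank0.
Qed.

Lemma chain s st u w : Inv s st -> fconnect par u w -> (st.1 u <= st.1 w)%MS.
Proof.
case=> HS Hsub _ _ _ H; rewrite -(iter_findex H).
elim: (findex par u w) => [|k IH] /=; first exact: submx_refl.
apply: submx_trans IH _.
case: (eqVneq (iter k par u) S) => [->|nS]; first by rewrite (parS Htree) submx_refl.
exact: Hsub.
Qed.

Lemma Inv_good st : Inv t st -> 2 * depth S par <= t -> good_event S par st.
Proof.
move=> I Ht; have I' := I; case: I' => HS Hsub Hr Hf Hg.
have pos : forall u, u != S -> 0 < \rank (st.1 u).
  move=> u uS; rewrite Hr // muln_gt0 /=; have := @dep_le _ S par u; lia.
have P1 : forall u w, u != S -> (st.1 u <= st.1 w)%MS = fconnect par u w.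
  move=> u w uS; case a : (fconnect par u w); first exact: chain I a.
  by apply/negbTE; apply: Hg => //; rewrite ?a // pos.
apply/andP; split.
  apply/forallP => u; apply/implyP => uS; apply/forallP => w; apply/implyP => _.
  by rewrite /ancestor P1.
apply/forallP => u; apply/implyP => uS; rewrite Hsub //=.
apply/forallP => w; apply/implyP => /and3P [wu wpu].
rewrite P1 // => uw.
have puw := anc_step uw wu.
have dlt := anc_dep Htree puw wpu; move: dlt.
have puS : par u != S.
  apply: contra wpu => /eqP pS; move: puw; rewrite pS => /(ancS Htree) ->; by rewrite eqxx.
rewrite Hr //.
case: (eqVneq w S) => [->|wS].
  rewrite HS mxrank1 => _; have := tcn; have dp := dep_pos Htree puS.
  have : c * (t + 2 - 2 * dep (par u)) <= c * t by rewrite leq_mul2l; apply/orP; right; lia.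
  lia.
rewrite Hr // ltn_pmul2l //; have := @dep_le _ S par (par u); lia.
Qed.

Lemma card_bad s st : Inv s st -> s < t ->
  #|[set f in draws S par c s.+1 st | [exists e : Eidx, Ev s st e f]]| * #|F| <=
  #|{: Eidx}| * #|draws S par c s.+1 st|.
Proof.
move=> I Hst.
have sub : [set f in draws S par c s.+1 st | [exists e : Eidx, Ev s st e f]] \subset
   \bigcup_(e in [set: Eidx]) [set f in draws S par c s.+1 st | Ev s st e f].
  apply/subsetP => f; rewrite inE => /andP [fD /existsP [e Ee]].
  by apply/bigcupP; exists e; [rewrite in_setT | rewrite in_set fD Ee].
apply: leq_trans (leq_mul (subset_leq_card sub) (leqnn _)) _.
apply: leq_trans (leq_mul (card_bigcup_le _ _) (leqnn _)) _.
rewrite big_distrl /=.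
apply: leq_trans (_ : \sum_(e in [set: Eidx]) #|draws S par c s.+1 st| <= _)%N.
  apply: leq_sum => e _; exact: ev_bound.
by rewrite sum_nat_const cardsT.
Qed.

Lemma zero_allowed s (st : st_t) v : (0%R : 'rV[F]_n) \in allowed S par c s st v.
Proof.
rewrite /allowed; case: ifP => _; last by rewrite inE.
by case: ifP => _; rewrite inE ?sub0mx.
Qed.

Lemma prob_ge0 k s (st : st_t) E : (0 <= prob S par c k s st E)%R.
Proof.
elim: k s st => [|k IH] s st /=; first by case: (E st).
apply: divr_ge0; last exact: ler0n.
by apply: sumr_ge0 => f _; exact: IH.
Qed.

Lemma prob_main (Hd : 2 * depth S par <= t) k : forall s st, Inv s st -> s + k = t ->
  (1 - (k * #|{: Eidx}|)%:R / (#|F|)%:R <=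
     prob S par c k s st (@good_event F V S par n))%R.
Proof.
elim: k => [|k IH] s st I Hsk.
  rewrite addn0 in Hsk; subst s; rewrite /= Inv_good // mul0n mul0r subr0 lexx //.
have Hst : s < t by lia.
rewrite /=.
set D := draws S par c s.+1 st.
set B := [set f in D | [exists e : Eidx, Ev s st e f]].
pose L : rat := (1 - (k * #|{: Eidx}|)%:R / (#|F|)%:R)%R.
have Hs : (\sum_(f in D) (if f \in B then 0 else L) <=
    \sum_(f in D) prob S par c k s.+1 (step S par s.+1 st f) (@good_event F V S par n))%R.
  apply: ler_sum => f fD; case: ifP => fB; first exact: prob_ge0.
  apply: IH; last by lia.
  apply: (Inv_step I Hst fD).
  by have := negbT fB; rewrite inE fD /= => /existsPn.
have BD : B \subset D by apply/subsetP => f; rewrite inE => /andP [].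
have eS : (\sum_(f in D) (if f \in B then 0 else L))%R = ((#|D| - #|B|)%:R * L)%R.
  rewrite (big_setID B) /= big1 ?add0r; last by move=> f /setIP [_ ->].
  rewrite (eq_bigr (fun _ => L)); last by move=> f /setDP [_ /negbTE ->].
  by rewrite sumr_const cardsDS // mulr_natl.
have cb := card_bad I Hst.
have BDn : #|B| <= #|D| by apply: subset_leq_card.
have D0 : 0 < #|D|.
  apply/card_gt0P; exists [ffun => 0%R]; rewrite inE; apply/forallP => p.
  by rewrite ffunE zero_allowed.
have q0 : 1 < #|F| by exact: card_finNzRing_gt1.
rewrite eS natrB // in Hs.
move: Hs cb BDn D0 q0; rewrite /L.
move: #|D| #|B| #|{: Eidx}| #|F| => N b K q Hs cb BDn D0 q0.
rewrite ler_pdivlMr ?ltr0n //; apply: le_trans Hs.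
have cbr : (b%:R * q%:R <= K%:R * N%:R :> rat)%R by rewrite -!natrM ler_nat.
have q0r : (0 < q%:R :> rat)%R by rewrite ltr0n; lia.
set y := (K%:R / q%:R : rat)%R.
have hy : (b%:R <= y * N%:R :> rat)%R.
  by rewrite /y mulrAC ler_pdivlMr.
have y0 : (0 <= y)%R by rewrite /y divr_ge0 ?ler0n.
have -> : ((k.+1 * K)%:R / q%:R = (k%:R + 1) * y :> rat)%R.
  by rewrite /y natrM -natr1 mulrA.
have -> : ((k * K)%:R / q%:R = k%:R * y :> rat)%R.
  by rewrite /y natrM mulrA.
have k0 : (0 <= k%:R :> rat)%R by exact: ler0n.
have b0 : (0 <= b%:R :> rat)%R by exact: ler0n.
have bky : (0 <= b%:R * k%:R * y :> rat)%R by apply: mulr_ge0 => //; apply: mulr_ge0.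
nra.
Qed.

End Main.

Local Open Scope ring_scope.

Theorem theorem3 (V : finType) (S : V) (par : V -> V) (n c t : nat) :
  is_rooted_tree S par ->
  (1 <= depth S par)%N ->
  (1 <= c)%N ->
  (2 * depth S par - 1 < t)%N ->
  (t < n %/ c)%N ->
  exists C : rat, forall F : finFieldType,
    1 - C / (#|F|)%:R <=
    prob S par c t 0 (init_state F S n) (@good_event F V S par n).
Proof.
move=> Ht Hd1 Hc Hdt.
case: c Hc => [//|c'] _ Htn.
exists (t * #|{: Eidx V c'}|)%:R => F.
have Hd : (2 * depth S par <= t)%N by lia.
exact: (prob_main Ht Htn Hd (Inv_init F Ht Htn) (add0n t)).
Qed.
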